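(* In the setting of the context, assume $\mathbf{A}^{-1}$ exists and $\mathbf{Q}_\Delta$ is given by the LU trick. Then for every $k\in\mathbb{N}$ there exist constants $c>0$, $c'\ge0$ and $\mu^*>0$ such that for all $\mu\ge\mu^*$, $$\Big\|\mathbf{C}\big(\mathbf{I}_{LMN}-\hat{\mathbf{P}}^{-1}\mathbf{C}\big)^k\Big\|\le\mu\Big(c\,\big\|\mathbf{I}_L\otimes(\mathbf{I}_M-\mathbf{Q}_\Delta^{-1}\mathbf{Q})^k\otimes\mathbf{I}_N\big\|+\frac{c'}{\mu}\Big),$$ i.e. the norm is bounded by $\mu\big(c\|\mathbf{I}_L\otimes(\mathbf{I}_M-\mathbf{Q}_\Delta^{-1}\mathbf{Q})^k\otimes\mathbf{I}_N\|+\mathcal{O}(1/\mu)\big)$.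
   Context: Fix positive integers $L,M,N$. $\mathbf{Q}=(q_{m,j})\in\mathbb{R}^{M\times M}$ with $q_{m,j}=\int_0^{\tau_m}\ell_j(s)\,ds$ is the collocation matrix for the (right) Gauss–Radau nodes $0<\tau_1<\dots<\tau_M=1$ on $[0,1]$ ($\ell_j$ Lagrange basis polynomials). LU trick: $\mathbf{Q}^T=\mathbf{L}_Q\mathbf{U}_Q$ with $\mathbf{L}_Q$ unit lower triangular and $\mathbf{U}_Q$ upper triangular, $\mathbf{Q}_\Delta=\mathbf{U}_Q^T$. $\mathbf{A}\in\mathbb{C}^{N\times N}$, $\mu>0$. $\mathbf{N}_M\in\mathbb{R}^{M\times M}$ has ones in its last column and zeros elsewhere, $\mathbf{H}=\mathbf{N}_M\otimes\mathbf{I}_N$, $\mathbf{E}\in\mathbb{R}^{L\times L}$ has ones on the first subdiagonal and zeros elsewhere. $\mathbf{C}=\mathbf{I}_{LMN}-\mu\,\mathbf{I}_L\otimes\mathbf{Q}\otimes\mathbf{A}-\mathbf{E}\otimes\mathbf{H}$, $\hat{\mathbf{P}}=\mathbf{I}_{LMN}-\mu\,\mathbf{I}_L\otimes\mathbf{Q}_\Delta\otimes\mathbf{A}$ (assumed invertible). $\|\cdot\|$ is any induced matrix norm. *)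

(* Defs.v *)
From HB Require Import structures.
From mathcomp Require Import all_boot all_order all_algebra.
From mathcomp Require Import complex mxtens.
From mathcomp Require Import classical_sets boolp reals.

Set Implicit Arguments.
Unset Strict Implicit.
Unset Printing Implicit Defensive.
Import Order.TTheory GRing.Theory Num.Theory.
Local Open Scope ring_scope.
Local Open Scope classical_set_scope.

Section SDC.
Variable R : realType.

Definition pint (p : {poly R}) (t : R) : R :=
  \sum_(i < size p) p`_i * t ^+ i.+1 / i.+1%:R.

Definition lagrange (M : nat) (tau : 'I_M -> R) (j : 'I_M) : {poly R} :=
  \prod_(m < M | m != j) (('X - (tau m)%:P) * ((tau j - tau m)^-1)%:P).

(* right Gauss--Radau nodes on [0,1]: 0 < tau_1 < ... < tau_M = 1, and the
   interpolatory quadrature on these nodes is exact for all polynomials of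
   degree <= 2M-2 (maximal degree with the right endpoint fixed). *)
Definition right_radau_nodes (M : nat) (tau : 'I_M -> R) : Prop :=
  [/\ (forall i : 'I_M, 0 < tau i),
      (forall i j : 'I_M, (i < j)%N -> tau i < tau j),
      (forall i : 'I_M, val i = M.-1 -> tau i = 1) &
      (forall p : {poly R}, (size p <= (2 * M).-1)%N ->
         pint p 1 = \sum_(j < M) pint (lagrange tau j) 1 * p.[tau j])].

Definition collocQ (M : nat) (tau : 'I_M -> R) : 'M[R]_M :=
  \matrix_(m, j) pint (lagrange tau j) (tau m).

Definition unit_lower_triangular (n : nat) (X : 'M[R]_n) : Prop :=
  forall i j : 'I_n, ((i < j)%N -> X i j = 0) /\ (i = j -> X i j = 1).

Definition upper_triangular (n : nat) (X : 'M[R]_n) : Prop :=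
  forall i j : 'I_n, (j < i)%N -> X i j = 0.

Definition cmx (m n : nat) (X : 'M[R]_(m, n)) : 'M[R[i]]_(m, n) :=
  map_mx (fun x => (x%:C)%C) X.

Definition NMmx (M : nat) : 'M[R[i]]_M := \matrix_(i, j) (val j == M.-1)%:R.
Definition Emx (L : nat) : 'M[R[i]]_L := \matrix_(i, j) (val i == (val j).+1)%:R.

Definition vector_norm (n : nat) (nu : 'cV[R[i]]_n -> R) : Prop :=
  [/\ (forall x, 0 <= nu x),
      (forall x, nu x = 0 -> x = 0),
      (forall (a : R[i]) x, nu (a *: x) = Normc.normc a * nu x) &
      (forall x y, nu (x + y) <= nu x + nu y)].

Definition opnorm (n : nat) (nu : 'cV[R[i]]_n -> R) (X : 'M[R[i]]_n) : R :=
  sup [set nu (X *m x) | x in [set x | nu x = 1]].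

Definition Cmx (L M N : nat) (Q : 'M[R]_M) (A : 'M[R[i]]_N) (mu : R)
  : 'M[R[i]]_(L * M * N) :=
  1%:M - (mu%:C)%C *: ((1%:M : 'M[R[i]]_L) *t cmx Q *t A)
       - Emx L *t NMmx M *t (1%:M : 'M[R[i]]_N).

Definition Phat (L M N : nat) (QD : 'M[R]_M) (A : 'M[R[i]]_N) (mu : R)
  : 'M[R[i]]_(L * M * N) :=
  1%:M - (mu%:C)%C *: ((1%:M : 'M[R[i]]_L) *t cmx QD *t A).

End SDC.

(* Main.v *)
Require Import Defs.
From HB Require Import structures.
From mathcomp Require Import all_boot all_order all_algebra.
From mathcomp Require Import complex mxtens.
From mathcomp Require Import classical_sets boolp reals.
From mathcomp Require Import topology normedtype derive.
From mathcomp Require Import ring lra zify.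
Set Implicit Arguments.
Unset Strict Implicit.
Unset Printing Implicit Defensive.
Import Order.TTheory GRing.Theory Num.Theory.
Import numFieldNormedType.Exports.
Local Open Scope ring_scope.
Section Basic.
Variable R : realType.
Local Notation normc := (@Normc.normc R).

Lemma normc_ge0 (z : R[i]) : 0 <= normc z.
Proof. by case: z => a b /=; exact: sqrtr_ge0. Qed.

Lemma normc_real (r : R) : normc (r%:C)%C = `|r|.
Proof. by rewrite /= expr0n /= addr0 sqrtr_sqr. Qed.

Lemma normc_le (a b : R) : normc (a +i* b)%C <= `|a| + `|b|.
Proof.
rewrite /= -[`|a| + `|b|]ger0_norm ?addr_ge0 // -sqrtr_sqr.
rewrite ler_wsqrtr //.
have h1 := real_normK (num_real a); have h2 := real_normK (num_real b).
have := normr_ge0 a; have := normr_ge0 b; nra.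
Qed.

Lemma Re_le_normc (z : R[i]) : `|complex.Re z| <= normc z.
Proof.
case: z => a b /=; rewrite -sqrtr_sqr ler_wsqrtr // lerDl sqr_ge0 //.
Qed.

Lemma Im_le_normc (z : R[i]) : `|complex.Im z| <= normc z.
Proof.
case: z => a b /=; rewrite -sqrtr_sqr ler_wsqrtr // lerDr sqr_ge0 //.
Qed.

Lemma normc_sum I (r : seq I) (P : pred I) (F : I -> R[i]) :
  normc (\sum_(i <- r | P i) F i) <= \sum_(i <- r | P i) normc (F i).
Proof.
elim/big_rec2: _ => [|i y1 y2 _ H]; first by rewrite Normc.normc0.
exact: le_trans (le_normcD _ _) (lerD (lexx _) H).
Qed.

Variable n : nat.
Variable nu : 'cV[R[i]]_n -> R.
Hypothesis Hnu : vector_norm nu.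

Lemma nu_ge0 x : 0 <= nu x. Proof. by case: Hnu. Qed.
Lemma nuZ a x : nu (a *: x) = normc a * nu x. Proof. by case: Hnu. Qed.
Lemma nuD x y : nu (x + y) <= nu x + nu y. Proof. by case: Hnu. Qed.
Lemma nu_eq0 x : nu x = 0 -> x = 0. Proof. by case: Hnu => _ H _ _; exact: H. Qed.
Lemma nu0 : nu 0 = 0.
Proof. by have := nuZ 0 0; rewrite scale0r Normc.normc0 mul0r. Qed.
Lemma nuN x : nu (- x) = nu x.
Proof. by rewrite -scaleN1r nuZ normcN Normc.normc1 mul1r. Qed.
Lemma nu_sum I (r : seq I) (P : pred I) (F : I -> 'cV_n) :
  nu (\sum_(i <- r | P i) F i) <= \sum_(i <- r | P i) nu (F i).
Proof.
elim: r => [|a r IH]; first by rewrite !big_nil nu0.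
rewrite !big_cons; case: (P a) => //.
exact: le_trans (nuD _ _) (lerD (lexx _) IH).
Qed.

Definition nu_e := \sum_(i < n) nu (delta_mx i (0 : 'I_1)).

Lemma nu_upper (x : 'cV[R[i]]_n) (s : R) : (forall i, normc (x i 0) <= s) -> nu x <= s * nu_e.
Proof.
move=> Hs; rewrite {1}[x]matrix_sum_delta /nu_e mulr_sumr.
apply: le_trans (nu_sum _ _ _) _; apply: ler_sum => i _.
rewrite big_ord1 nuZ; apply: ler_wpM2r; [exact: nu_ge0| exact: Hs].
Qed.

End Basic.
Section Lower.
Variable R : realType.
Variable n : nat.
Variable nu : 'cV[R[i]]_n.+1 -> R.
Hypothesis Hnu : vector_norm nu.
Local Notation normc := (@Normc.normc R).

Definition phi (v : 'rV[R]_(n.+1 + n.+1)) : 'cV[R[i]]_n.+1 :=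
  \col_i ((lsubmx v 0 i) +i* (rsubmx v 0 i))%C.
Definition psi (x : 'cV[R[i]]_n.+1) : 'rV[R]_(n.+1 + n.+1) :=
  row_mx (\row_i complex.Re (x i 0)) (\row_i complex.Im (x i 0)).

Lemma phiK x : phi (psi x) = x.
Proof.
apply/matrixP => i j; rewrite ord1 /phi /psi mxE row_mxKl row_mxKr !mxE.
by case: (x i 0).
Qed.

Lemma phiB v w : phi (v - w) = phi v - phi w.
Proof. by apply/matrixP => i j; rewrite !mxE. Qed.

Lemma phiZ (r : R) v : phi (r *: v) = (r%:C)%C *: phi v.
Proof. apply/matrixP => i j; rewrite !mxE. by simpc. Qed.

Lemma phi_eq0 v : phi v = 0 -> v = 0.
Proof.
move=> h; rewrite -[v]hsubmxK.
have hl : lsubmx v = 0.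
  apply/matrixP => i j; rewrite ord1 mxE.
  by have := congr1 (fun M : 'cV[R[i]]_n.+1 => complex.Re (M j 0)) h; rewrite !mxE.
have hr : rsubmx v = 0.
  apply/matrixP => i j; rewrite ord1 mxE.
  by have := congr1 (fun M : 'cV[R[i]]_n.+1 => complex.Im (M j 0)) h; rewrite !mxE.
by rewrite hl hr row_mx0.
Qed.

Lemma entry_le_norm k (v : 'rV[R]_k) j : `|v 0 j| <= `|v|.
Proof.
rewrite [leRHS]/Num.Def.normr /= mx_normrE; apply/bigmax_geP; right.
by exists (0, j).
Qed.

Definition beta := 2 * nu_e nu.

Lemma phi_bound v : nu (phi v) <= beta * `|v|.
Proof.
rewrite /beta.
apply: le_trans (nu_upper Hnu (s := 2 * `|v|) _) _.
  move=> i; rewrite mxE; apply: le_trans (normc_le _ _) _.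
  rewrite mulr2n mulrDl mul1r; apply: lerD; rewrite mxE; exact: entry_le_norm.
by rewrite mulrAC.
Qed.

Definition fnu (v : 'rV[R]_(n.+1 + n.+1)) := nu (phi v).

Lemma beta_ge0 : 0 <= beta.
Proof. rewrite /beta /nu_e mulr_ge0 // sumr_ge0 // => i _; exact: nu_ge0. Qed.

Lemma fnu_lip v w : `|fnu v - fnu w| <= beta * `|v - w|.
Proof.
rewrite /fnu; apply: le_trans _ (phi_bound _); rewrite phiB.
have h1 := nuD Hnu (phi w) (phi v - phi w); rewrite addrC subrK in h1.
have h2 := nuD Hnu (phi v) (phi w - phi v); rewrite addrC subrK -opprB (nuN Hnu) in h2.
rewrite ler_norml; apply/andP; split; lra.
Qed.

Lemma fnu_cont : continuous fnu.
Proof.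
move=> v; apply/(@cvgrPdist_lt _ _ _ (nbhs v) (nbhs_filter v)) => e e0.
have bp : 0 < beta + 1 by have := beta_ge0; lra.
near=> w.
apply: le_lt_trans (fnu_lip v w) _.
have H : `|v - w| < e / (beta + 1).
  near: w; exact: (@cvgr_dist_lt _ _ _ (nbhs v) (nbhs_filter v) id v cvg_id _ (divr_gt0 e0 bp)).
rewrite ltr_pdivlMr // in H.
have := beta_ge0; have := normr_ge0 (v - w); nra.
Unshelve. all: by end_near.
Qed.

Definition Sph := [set v : 'rV[R]_(n.+1 + n.+1) | `|v| = 1]%classic.

Lemma Sph_closed : closed Sph.
Proof.
have := (continuous_closedP (@Num.Def.normr R 'rV[R]_(n.+1 + n.+1))).1 norm_continuous _ (@closed_eq R 1).
by [].
Qed.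

Lemma Sph_bounded : bounded_set Sph.
Proof.
rewrite /= /bounded_near.
near=> M => x /= ->.
near: M; exact: nbhs_pinfty_ge.
Unshelve. all: by end_near.
Qed.

Lemma Sph0 : (Sph !=set0)%classic.
Proof.
pose u : 'rV[R]_(n.+1 + n.+1) := const_mx 1.
have u0 : u != 0.
  apply/eqP => /matrixP /(_ 0 (lshift _ 0)); rewrite !mxE => /eqP; rewrite oner_eq0.
  by [].
exists (`|u|^-1 *: u); rewrite /Sph /= normrZ normrV ?unitfE ?normr_eq0 //.
by rewrite ger0_norm // mulVf // normr_eq0.
Qed.

Lemma nu_lower_S : exists2 a : R, 0 < a & forall (x : 'cV[R[i]]_n.+1) i, normc (x i 0) <= a * nu x.
Proof.
have Scomp : compact Sph by apply: bounded_closed_compact; [exact: Sph_bounded| exact: Sph_closed].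
have [c cS cmin] := compact_EVT_min Sph0 Scomp (continuous_subspaceT fnu_cont).
set m := fnu c.
have mpos : 0 < m.
  rewrite lt_def nu_ge0 // andbT; apply/eqP => h.
  have /phi_eq0 c0 := nu_eq0 Hnu h.
  by move: cS; rewrite inE /Sph /= c0 normr0 => /esym/eqP; rewrite oner_eq0.
exists (2 / m); first by rewrite divr_gt0.
move=> x i.
set u := psi x.
have e1 : u 0 (lshift _ i) = complex.Re (x i 0) by rewrite /u /psi row_mxEl mxE.
have e2 : u 0 (rshift _ i) = complex.Im (x i 0) by rewrite /u /psi row_mxEr mxE.
have hx : normc (x i 0) <= 2 * `|u|.
  have -> : x i 0 = (complex.Re (x i 0) +i* complex.Im (x i 0))%C by case: (x i 0).
  apply: le_trans (normc_le _ _) _.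
  rewrite -e1 -e2 mulr2n mulrDl mul1r; apply: lerD; exact: entry_le_norm.
have key : m * `|u| <= nu x.
  have [u0|u0] := eqVneq u 0; first by rewrite u0 normr0 mulr0 nu_ge0.
  have nup : 0 < `|u| by rewrite normr_gt0.
  have wS : (`|u|^-1 *: u) \in Sph.
    by rewrite inE /Sph /= normrZ normrV ?unitfE ?normr_eq0 // ger0_norm // mulVf // normr_eq0.
  have := cmin _ wS; rewrite /fnu phiZ /u phiK (nuZ Hnu) normc_real ger0_norm; last first.
    by rewrite invr_ge0 ltW.
  rewrite -/m -/u => h.
  have := ler_wpM2l (ltW nup) h; rewrite mulrA mulfV ?mul1r ?normr_eq0 //.
  by rewrite mulrC.
apply: le_trans hx _.
rewrite -mulrA ler_pM2l //.
by rewrite -(ler_pM2l mpos) mulrA mulfV ?mul1r // lt0r_neq0.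
Qed.

End Lower.

Lemma nu_lower (R : realType) n (nu : 'cV[R[i]]_n -> R) : vector_norm nu ->
  exists2 a : R, 0 < a & forall (x : 'cV[R[i]]_n) i, Normc.normc (x i 0) <= a * nu x.
Proof.
case: n nu => [|k] nu H; last exact: nu_lower_S.
by exists 1 => // x [].
Qed.

Section OpNorm.
Variable R : realType.
Variable n : nat.
Hypothesis n0 : (0 < n)%N.
Variable nu : 'cV[R[i]]_n -> R.
Hypothesis Hnu : vector_norm nu.
Local Notation normc := (@Normc.normc R).
Local Notation opn := (opnorm nu).

Definition mxg (X : 'M[R[i]]_n) := \sum_i \sum_j normc (X i j).

Lemma sum_term_le (I : eqType) (r : seq I) (P : pred I) (F : I -> R) j :
  uniq r -> j \in r -> P j -> (forall i, P i -> 0 <= F i) ->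
  F j <= \sum_(i <- r | P i) F i.
Proof.
move=> ur jr Pj F0; rewrite big_mkcond (bigD1_seq j) //= Pj lerDl sumr_ge0 // => i _.
by case: ifP => // /F0.
Qed.

Lemma nu_mul_bound : exists2 K : R, 0 <= K &
  forall (X : 'M[R[i]]_n) x, nu (X *m x) <= K * mxg X * nu x.
Proof.
have [a a0 Ha] := nu_lower Hnu.
exists (a * nu_e nu).
  apply: mulr_ge0; first exact: ltW.
  by apply: sumr_ge0 => i _; exact: nu_ge0.
move=> X x.
apply: le_trans (@nu_upper R n nu Hnu (X *m x) (mxg X * a * nu x) _) _; last first.
  by rewrite le_eqVlt; apply/orP; left; apply/eqP; ring.
move=> i; rewrite mxE; apply: le_trans (normc_sum _ _ _) _.
apply: le_trans (_ : \sum_j normc (X i j) * (a * nu x) <= _).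
  apply: ler_sum => j _; rewrite Normc.normcM; apply: ler_wpM2l; first exact: normc_ge0.
  exact: Ha.
rewrite -mulr_suml -mulrA; apply: ler_wpM2r.
  by apply: mulr_ge0; [exact: ltW | exact: nu_ge0].
rewrite /mxg; apply: (sum_term_le (F := fun i => \sum_j normc (X i j))) => //.
- exact: index_enum_uniq.
- by rewrite mem_index_enum.
- by move=> k _; apply: sumr_ge0 => j _; exact: normc_ge0.
Qed.

Definition opset (X : 'M[R[i]]_n) := [set nu (X *m x) | x in [set x | nu x = 1]]%classic.

Lemma opset0 X : (opset X !=set0)%classic.
Proof.
pose e : 'cV[R[i]]_n := delta_mx (Ordinal n0) 0.
have e0 : e != 0.
  apply/eqP => /matrixP /(_ (Ordinal n0) 0); rewrite !mxE !eqxx /= => /eqP.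
  by rewrite oner_eq0.
have nep : 0 < nu e.
  rewrite lt_def nu_ge0 // andbT; apply/eqP => /(nu_eq0 Hnu) h; by rewrite h eqxx in e0.
exists (nu (X *m ((((nu e)^-1)%:C)%C *: e))); exists ((((nu e)^-1)%:C)%C *: e) => //.
by rewrite /= (nuZ Hnu) normc_real ger0_norm ?invr_ge0 ?ltW // mulVf // lt0r_neq0.
Qed.

Lemma opset_sup X : has_sup (opset X).
Proof.
split; first exact: opset0.
have [K K0 HK] := nu_mul_bound.
exists (K * mxg X) => y [x /= x1 <-].
by have := HK X x; rewrite x1 mulr1.
Qed.

Lemma opnorm_ub X x : nu (X *m x) <= opn X * nu x.
Proof.
have [->|x0] := eqVneq x 0; first by rewrite mulmx0 (nu0 Hnu) mulr0.
have nxp : 0 < nu x.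
  rewrite lt_def nu_ge0 // andbT; apply/eqP => /(nu_eq0 Hnu) h; by rewrite h eqxx in x0.
have h : (nu x)^-1 * nu (X *m x) <= opn X.
  apply: (sup_upper_bound (opset_sup X)); exists ((((nu x)^-1)%:C)%C *: x).
    by rewrite /= (nuZ Hnu) normc_real ger0_norm ?invr_ge0 ?ltW // mulVf // lt0r_neq0.
  by rewrite -scalemxAr (nuZ Hnu) normc_real ger0_norm ?invr_ge0 ?ltW.
by rewrite ler_pdivrMl // in h; rewrite mulrC.
Qed.

Lemma opnorm_le X k : (forall x, nu (X *m x) <= k * nu x) -> opn X <= k.
Proof.
move=> H; apply: ge_sup; first exact: opset0.
by move=> y [x /= x1 <-]; have := H x; rewrite x1 mulr1.
Qed.

Lemma opnorm_ge0 X : 0 <= opn X.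
Proof.
have [y [x /= x1 _]] := opset0 X.
apply: le_trans (nu_ge0 Hnu (X *m x)) _.
by have := opnorm_ub X x; rewrite x1 mulr1.
Qed.

Lemma opnormM X Y : opn (X *m Y) <= opn X * opn Y.
Proof.
apply: opnorm_le => x; rewrite -mulmxA -mulrA.
apply: le_trans (opnorm_ub _ _) _; apply: ler_wpM2l; first exact: opnorm_ge0.
exact: opnorm_ub.
Qed.

Lemma opnormD X Y : opn (X + Y) <= opn X + opn Y.
Proof.
apply: opnorm_le => x; rewrite mulmxDl mulrDl.
apply: le_trans (nuD Hnu _ _) _; apply: lerD; exact: opnorm_ub.
Qed.

Lemma opnormN X : opn (- X) <= opn X.
Proof. by apply: opnorm_le => x; rewrite mulNmx (nuN Hnu); exact: opnorm_ub. Qed.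

Lemma opnormB X Y : opn (X - Y) <= opn X + opn Y.
Proof. apply: le_trans (opnormD _ _) _; apply: lerD => //; exact: opnormN. Qed.

Lemma opnormZ a X : opn (a *: X) <= normc a * opn X.
Proof.
apply: opnorm_le => x; rewrite -scalemxAl (nuZ Hnu) -mulrA.
apply: ler_wpM2l; [exact: normc_ge0 | exact: opnorm_ub].
Qed.

Lemma opnorm1 : opn 1%:M <= 1.
Proof. by apply: opnorm_le => x; rewrite mul1mx mul1r. Qed.

Lemma opnormX X k : opn (X ^+ k) <= opn X ^+ k.
Proof.
elim: k => [|k IH]; first by rewrite !expr0; exact: opnorm1.
rewrite !exprS; apply: le_trans (opnormM _ _) _.
by apply: ler_wpM2l; [exact: opnorm_ge0 | exact: IH].
Qed.

End OpNorm.
Section Colloc.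
Variable R : realType.
Variable M : nat.
Variable tau : 'I_M -> R.
Hypothesis tau_inj : injective tau.
Hypothesis tau_pos : forall i, 0 < tau i.

Lemma lagrange_eval i j : (Defs.lagrange tau j).[tau i] = (i == j)%:R.
Proof.
rewrite /Defs.lagrange horner_prod.
have [<-|ij] := eqVneq i j.
  rewrite big1 // => m mi; rewrite hornerM hornerXsubC hornerC mulfV //.
  by rewrite subr_eq0; apply/eqP => /tau_inj h; rewrite h eqxx in mi.
rewrite (bigD1 i) //= hornerM hornerXsubC subrr !mul0r //.
Qed.

Lemma size_lagrange j : (size (Defs.lagrange tau j) <= M)%N.
Proof.
rewrite /Defs.lagrange; apply: leq_trans (size_poly_prod_leq _ _) _.
have h : (\sum_(m | m != j) size ((('X - (tau m)%:P) * ((tau j - tau m)^-1)%:P)%R) <= \sum_(m | m != j) 2)%N.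
  apply: leq_sum => m _; apply: leq_trans (size_polyMleq _ _) _.
  by rewrite size_XsubC; have := size_polyC_leq1 ((tau j - tau m)^-1); case: (size _) => [|[|]].
rewrite sum_nat_const in h.
have hc : #|[pred m | m != j]| = M.-1 by rewrite cardC1 card_ord.
have Mpos : (0 < M)%N by case: M j {h hc} => [[]|].
move: h; rewrite /= hc => h.
move: h; set s := (\sum_(_ < _ | _) _)%N; lia.
Qed.

Definition pintN (k : nat) (p : {poly R}) (t : R) : R :=
  \sum_(i < k) p`_i * t ^+ i.+1 / i.+1%:R.

Lemma pint_N (p : {poly R}) k (t : R) : (size p <= k)%N -> pint p t = pintN k p t.
Proof.
move=> hk; rewrite /pint /pintN (big_ord_widen k (fun i => p`_i * t ^+ i.+1 / i.+1%:R)) //.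
rewrite big_mkcond /=; apply: eq_bigr => i _; case: ifP => // /negbT; rewrite -leqNgt => hi.
by rewrite nth_default // !mul0r.
Qed.

Lemma colloc_inj (w : 'I_M -> R) :
  (forall m, \sum_j w j * pint (Defs.lagrange tau j) (tau m) = 0) -> forall j, w j = 0.
Proof.
move=> H.
set p := \sum_j w j *: Defs.lagrange tau j.
have hp : forall t, \sum_j w j * pint (Defs.lagrange tau j) t = pintN M p t.
  move=> t; under eq_bigr do rewrite (pint_N _ (size_lagrange _)).
  rewrite /pintN /p.
  under [RHS]eq_bigr do rewrite coef_sum mulr_suml mulr_suml.
  rewrite exchange_big /=; apply: eq_bigr => j _; rewrite mulr_sumr; apply: eq_bigr => i _.
  by rewrite coefZ !mulrA.
set P := \poly_(i < M.+1) (if i is k.+1 then p`_k / k.+1%:R else 0).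
have hP t : P.[t] = pintN M p t.
  rewrite horner_poly big_ord_recl /= mul0r add0r /pintN; apply: eq_bigr => i _.
  by rewrite /bump /= mulrAC.
have P0 : P = 0.
  apply/eqP; apply/negPn/negP => Pn0.
  have := max_poly_roots (rs := 0 :: [seq tau m | m <- enum 'I_M]) Pn0.
  have sP : (size P <= M.+1)%N by exact: size_poly.
  rewrite /= size_map size_enum_ord.
  have -> : root P 0.
    rewrite /root hP /pintN big1 // => i _; by rewrite expr0n /= mulr0 mul0r.
  have -> : all (root P) [seq tau m | m <- enum 'I_M].
    apply/allP => x /mapP [m _ ->]; by rewrite /root hP -hp H.
  have -> : 0 \notin [seq tau m | m <- enum 'I_M].
    apply/negP => /mapP [m _] /esym h; by have := tau_pos m; rewrite h ltxx.
  rewrite map_inj_uniq ?enum_uniq //= => /(_ isT isT) h.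
  by move: (leq_ltn_trans sP h); rewrite ltnn.
have pc : forall k, p`_k = 0.
  move=> k; case: (ltnP k M) => hk.
    have := congr1 (fun q : {poly R} => q`_k.+1) P0; rewrite coef_poly coef0 /= ltnS hk.
    move=> /eqP; rewrite mulf_eq0 invr_eq0 pnatr_eq0 orbF => /eqP //.
  rewrite /p coef_sum big1 // => j _; rewrite coefZ nth_default ?mulr0 //.
  exact: leq_trans (size_lagrange _) hk.
have p0 : p = 0 by apply/polyP => k; rewrite pc coef0.
move=> i; have := congr1 (fun q : {poly R} => q.[tau i]) p0.
rewrite /p horner_sum hornerC.
under eq_bigr do rewrite hornerZ lagrange_eval.
rewrite (bigD1 i) //= eqxx mulr1 big1 ?addr0 // => j ji.
by rewrite eq_sym (negbTE ji) mulr0.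
Qed.

Lemma collocQ_unit : (collocQ tau)^T \in unitmx.
Proof.
rewrite -row_free_unit -kermx_eq0; apply/eqP/row_matrixP => r; rewrite row0.
set u := row r (kermx _).
have hu : u *m (collocQ tau)^T = 0 by rewrite /u -row_mul mulmx_ker row0.
apply/rowP => j; rewrite [RHS]mxE; move: j.
apply: (colloc_inj (w := fun j => u 0 j)) => m.
transitivity ((u *m (collocQ tau)^T) 0 m); last by rewrite hu mxE.
by rewrite mxE; apply: eq_bigr => k _; rewrite !mxE.
Qed.
End Colloc.
Section Tens.
Variable R : realType.
Local Notation C := R[i].

Lemma cmxM m p q (X : 'M[R]_(m, p)) (Y : 'M[R]_(p, q)) : cmx (X *m Y) = cmx X *m cmx Y.
Proof.
apply/matrixP => i j; rewrite !mxE rmorph_sum; apply: eq_bigr => k _.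
by rewrite !mxE rmorphM.
Qed.

Lemma cmx1 m : cmx (1%:M : 'M[R]_m) = 1%:M.
Proof. by apply/matrixP => i j; rewrite !mxE; case: (i == j). Qed.

Lemma cmxB m p (X Y : 'M[R]_(m, p)) : cmx (X - Y) = cmx X - cmx Y.
Proof. by apply/matrixP => i j; rewrite !mxE rmorphB. Qed.

Lemma cmxX m (X : 'M[R]_m) k : cmx (X ^+ k) = cmx X ^+ k.
Proof.
elim: k => [|k IH]; first by rewrite !expr0 cmx1.
by rewrite !exprS -!mulmxE cmxM IH.
Qed.

Lemma tens11 m p : (1%:M : 'M[C]_m) *t (1%:M : 'M[C]_p) = 1%:M.
Proof.
apply/matrixP => i j.
case: (mxtens_indexP i) => i0 i1; case: (mxtens_indexP j) => j0 j1.
rewrite tensmxE !mxE -natrM mulnb; congr (_%:R).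
rewrite (inj_eq (can_inj (@mxtens_indexK _ _))).
by rewrite xpair_eqE.
Qed.

Lemma tensB3 a b c (X Y : 'M[C]_b) (Z : 'M[C]_c) :
  (1%:M : 'M[C]_a) *t (X - Y) *t Z = (1%:M : 'M[C]_a) *t X *t Z - (1%:M : 'M[C]_a) *t Y *t Z.
Proof. by apply/matrixP => i j; rewrite !mxE mulrBr mulrBl. Qed.

Lemma tensM3 a b c (X X' : 'M[C]_b) (Z Z' : 'M[C]_c) :
  ((1%:M : 'M[C]_a) *t X *t Z) *m ((1%:M : 'M[C]_a) *t X' *t Z')
  = (1%:M : 'M[C]_a) *t (X *m X') *t (Z *m Z').
Proof. by rewrite !tensmx_mul mul1mx. Qed.

Lemma tens1_3 a b c : (1%:M : 'M[C]_a) *t (1%:M : 'M[C]_b) *t (1%:M : 'M[C]_c) = 1%:M.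
Proof. by rewrite !tens11. Qed.

End Tens.
Section Pert.
Variable R : realType.
Variable n : nat.
Hypothesis n0 : (0 < n)%N.
Variable nu : 'cV[R[i]]_n -> R.
Hypothesis Hnu : vector_norm nu.
Local Notation o := (opnorm nu).

Lemma opnorm0 : o 0 <= 0.
Proof. by apply: opnorm_le => // x; rewrite mul0mx (nu0 Hnu) mul0r. Qed.

Lemma pow_pert (K : 'M[R[i]]_n) (e : R) : 0 <= e -> forall k, exists2 c : R, 0 <= c &
  forall (T : 'M[R[i]]_n) (mu : R), 1 <= mu -> o (T - K) <= e / mu ->
    o (T ^+ k - K ^+ k) <= c / mu.
Proof.
move=> e0; elim=> [|k [c c0 IH]].
  by exists 0 => // T mu _ _; rewrite !expr0 subrr mul0r; exact: opnorm0.
exists (c * (e + o K) + o K ^+ k * e).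
  by rewrite addr_ge0 ?mulr_ge0 ?exprn_ge0 ?addr_ge0 // opnorm_ge0.
move=> T mu mu1 hT.
have mu0 : 0 < mu by apply: lt_le_trans ltr01 mu1.
have hTn : o T <= e + o K.
  have -> : T = (T - K) + K by rewrite subrK.
  apply: le_trans (opnormD n0 Hnu _ _) _; apply: lerD => //.
  apply: le_trans hT _; rewrite ler_pdivrMr // ler_peMr //.
have -> : T ^+ k.+1 - K ^+ k.+1 = (T ^+ k - K ^+ k) *m T + K ^+ k *m (T - K).
  by rewrite !exprSr -!mulmxE mulmxBl mulmxBr addrA subrK.
apply: le_trans (opnormD n0 Hnu _ _) _.
have h1 := opnormM n0 Hnu (T ^+ k - K ^+ k) T.
have h2 := opnormM n0 Hnu (K ^+ k) (T - K).
have h3 := opnormX n0 Hnu K k.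
have g1 := opnorm_ge0 n0 Hnu (T ^+ k - K ^+ k).
have g2 := opnorm_ge0 n0 Hnu T.
have g3 := opnorm_ge0 n0 Hnu (K ^+ k).
have g4 := opnorm_ge0 n0 Hnu (T - K).
have g5 := opnorm_ge0 n0 Hnu K.
have IHk := IH T mu mu1 hT.
rewrite mulrDl; apply: lerD.
  apply: le_trans h1 _; rewrite mulrAC.
  apply: ler_pM => //.
apply: le_trans h2 _; rewrite -mulrA; apply: ler_pM => //.
Qed.
End Pert.

Lemma lin_id1 (R : realType) n (Z X2 X3 X4 : 'M[R[i]]_n) (c : R[i]) : c != 0 ->
  (1%:M - (Z - c *: X2 - X3)) - (1%:M - X4) = - Z + c *: (X2 + c^-1 *: X4) + X3.
Proof.
move=> c0; apply/matrixP => i j; rewrite !mxE; field; exact: c0.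
Qed.

Lemma lin_id2 (R : realType) n (FU DU DV : 'M[R[i]]_n) (U : 'M[R[i]]_n) (c : R[i]) :
  U - c *: DU - FU = (U - FU) - c *: DV - c *: (DU - DV).
Proof. by apply/matrixP => i j; rewrite !mxE; ring. Qed.

Section NumH.
Variable R : realType.
Lemma nh1 (g d f : R) : 0 <= g -> 0 <= d -> 0 <= f -> 0 <= 2 * g + 2 * g ^+ 2 * d + 2 * g * f.
Proof.
move=> g0 d0 f0; have := mulr_ge0 (mulr_ge0 g0 g0) d0; have := mulr_ge0 g0 f0.
rewrite expr2; lra.
Qed.
Lemma nh2 (g d f mu : R) : 0 < mu ->
  2 * g / mu + mu * (mu^-1 * (2 * g / mu * g) * d) + 2 * g / mu * f
  = (2 * g + 2 * g ^+ 2 * d + 2 * g * f) / mu.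
Proof. by move=> mu0; field; exact: lt0r_neq0. Qed.
Lemma nh3 (d ck mu : R) : 0 < mu -> d * ck = mu * (d * (ck / mu)).
Proof. by move=> mu0; field; exact: lt0r_neq0. Qed.
Lemma nh4 (mu a Y : R) : 0 < mu -> mu * (a + Y / mu) = mu * a + Y.
Proof. by move=> mu0; field; exact: lt0r_neq0. Qed.
Lemma nh5 (X P Q Y : R) : P <= Q -> X + P + Y <= Q + (Y + X).
Proof. lra. Qed.
Lemma nh6 (g mu : R) : 0 <= g -> 1 + 2 * g <= mu -> 0 < mu /\ 1 <= mu.
Proof. move=> *; split; lra. Qed.
Lemma nh7 (d : R) : 0 <= d -> 0 < d + 1.
Proof. lra. Qed.
Lemma nh8 (g : R) : 0 <= g -> 0 < 1 + 2 * g.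
Proof. lra. Qed.
End NumH.

Section Generic.
Variable R : realType.
Variable n : nat.
Hypothesis n0 : (0 < n)%N.
Variable nu : 'cV[R[i]]_n -> R.
Hypothesis Hnu : vector_norm nu.
Local Notation o := (opnorm nu).
Local Notation normc := (@Normc.normc R).
Variables Dm Bm Gm Fm Km : 'M[R[i]]_n.
Hypothesis GB : Gm *m Bm = 1%:M.
Hypothesis BG : Bm *m Gm = 1%:M.
Hypothesis Km_def : Km = 1%:M - Gm *m Dm.


Lemma Zbound mu : 1 + 2 * o Gm <= mu -> (1%:M - (mu%:C)%C *: Bm) \in unitmx ->
  o (invmx ((1%:M - (mu%:C)%C *: Bm))) <= 2 * o Gm / mu.
Proof.
move=> hmu hP.
have g0 : 0 <= o Gm := opnorm_ge0 n0 Hnu Gm.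
have mu0 : 0 < mu by apply: lt_le_trans (hmu); lra.
set g := o Gm.
have hmu2 : 1 + 2 * g <= mu := hmu.
have g1 : 0 <= g := g0.
set P := (1%:M - (mu%:C)%C *: Bm).
have Pe : P = 1%:M - (mu%:C)%C *: Bm by [].
have key x : nu x * mu <= 2 * g * nu (P *m x).
  have h1 : nu x <= g * nu (Bm *m x).
    by rewrite -{1}[x]mul1mx -GB -mulmxA; exact: (opnorm_ub n0 Hnu).
  have h2 : mu * nu (Bm *m x) <= nu x + nu (P *m x).
    have e : (mu%:C)%C *: (Bm *m x) = x + - (P *m x).
      by rewrite Pe mulmxBl mul1mx -scalemxAl opprB addrC subrK.
    have := nuD Hnu x (- (P *m x)).
    by rewrite -e (nuZ Hnu) normc_real ger0_norm ?(ltW mu0) // (nuN Hnu).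
  have nb0 := nu_ge0 Hnu (Bm *m x).
  have p1 : 0 <= g * nu (Bm *m x) * (mu - 2 * g).
    by rewrite !mulr_ge0 // subr_ge0; lra.
  have p2 : g * (mu * nu (Bm *m x)) <= g * (g * nu (Bm *m x) + nu (P *m x)).
    by apply: ler_wpM2l => //; lra.
  have p3 : nu x * mu <= g * nu (Bm *m x) * mu by apply: ler_wpM2r => //; exact: ltW.
  lra.
apply: (opnorm_le n0 Hnu) => y.
have := key (invmx P *m y); rewrite mulmxA mulmxV // mul1mx => h.
by rewrite mulrAC ler_pdivlMr.
Qed.


Lemma main_bound k : exists c c' mustar : R,
  [/\ 0 < c, 0 <= c', 0 < mustar &
   forall mu : R, mustar <= mu -> (1%:M - (mu%:C)%C *: Bm) \in unitmx ->
    o ((1%:M - (mu%:C)%C *: Dm - Fm) *m (1%:M - invmx ((1%:M - (mu%:C)%C *: Bm)) *m (1%:M - (mu%:C)%C *: Dm - Fm)) ^+ k)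
      <= mu * (c * o (Km ^+ k) + c' / mu)].
Proof.
have g0 : 0 <= o Gm := opnorm_ge0 n0 Hnu Gm.
have d0 : 0 <= o Dm := opnorm_ge0 n0 Hnu Dm.
have f0 : 0 <= o Fm := opnorm_ge0 n0 Hnu Fm.
have kk0 : 0 <= o Km := opnorm_ge0 n0 Hnu Km.
pose g := o Gm; pose d := o Dm; pose f := o Fm; pose kk := o Km.
have d1 : 0 <= d := d0.
have f1 : 0 <= f := f0.
have kk1 : 0 <= kk := kk0.
have g1 : 0 <= g := g0.
pose e := 2 * g + 2 * g ^+ 2 * d + 2 * g * f.
have e0 : 0 <= e := nh1 g1 d1 f1.
have [ck ck0 Hck] := pow_pert n0 Hnu Km e0 k.
exists (d + 1), (d * ck + (1 + f) * (kk + e) ^+ k), (1 + 2 * g); split.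
- exact: nh7.
- apply: addr_ge0; first exact: mulr_ge0 d1 ck0.
  apply: mulr_ge0; first exact: addr_ge0 ler01 f1.
  apply: exprn_ge0; exact: addr_ge0 kk1 e0.
- exact: nh8.
move=> mu hmu hP.
have hmu2 : 1 + 2 * o Gm <= mu := hmu.
have [mu0 mu1] := nh6 g1 hmu.
pose c := (mu%:C)%C.
have c0 : c != 0.
  apply/eqP => h; have := congr1 (@complex.Re R) h; rewrite /= => h2.
  by move: mu0; rewrite h2 ltxx.
have nc : normc c = mu by rewrite normc_real ger0_norm // ltW.
have nci : normc c^-1 = mu^-1 by rewrite Normc.normcV nc.
pose P := (1%:M - (mu%:C)%C *: Bm); pose Z := invmx P; pose Cm := (1%:M - (mu%:C)%C *: Dm - Fm).
change (o (Cm *m (1%:M - Z *m Cm) ^+ k) <= mu * ((d + 1) * o (Km ^+ k) + (d * ck + (1 + f) * (kk + e) ^+ k) / mu)).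
have hZ : o Z <= 2 * g / mu := Zbound hmu2 hP.
have Cme : Cm = 1%:M - c *: Dm - Fm by [].
have Pe : P = 1%:M - c *: Bm by [].
have ZP : Z *m P = 1%:M by exact: mulVmx.
pose W := Z + c^-1 *: Gm.
have We : W = c^-1 *: (Z *m Gm).
  have h : Z *m Gm - c *: Z = Gm.
    have := congr1 (mulmx^~ Gm) ZP.
    by rewrite /= mul1mx Pe mulmxBr mulmx1 -scalemxAr mulmxBl -scalemxAl -mulmxA BG mulmx1.
  by rewrite /W -{1}h scalerBr scalerA mulVf // scale1r addrC subrK.
have Z0 : 0 <= o Z := opnorm_ge0 n0 Hnu Z.
have hW : o W <= mu^-1 * (2 * g / mu * g).
  rewrite We; apply: le_trans (opnormZ n0 Hnu _ _) _; rewrite nci.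
  apply: ler_wpM2l; first by rewrite invr_ge0 ltW.
  apply: le_trans (opnormM n0 Hnu _ _) _; exact: ler_wpM2r.
pose T := 1%:M - Z *m Cm.
change (o (Cm *m T ^+ k) <= mu * ((d + 1) * o (Km ^+ k) + (d * ck + (1 + f) * (kk + e) ^+ k) / mu)).
have Te : T - Km = - Z + c *: (W *m Dm) + Z *m Fm.
  rewrite /T Km_def Cme !mulmxBr mulmx1 -scalemxAr /W mulmxDl -scalemxAl.
  exact: lin_id1.
have hE : o (T - Km) <= e / mu.
  rewrite Te.
  have b1 : o (- Z) <= 2 * g / mu by apply: le_trans (opnormN n0 Hnu _) hZ.
  have b2 : o (c *: (W *m Dm)) <= mu * (mu^-1 * (2 * g / mu * g) * d).
    apply: le_trans (opnormZ n0 Hnu _ _) _; rewrite nc.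
    apply: ler_wpM2l; first exact: ltW.
    apply: le_trans (opnormM n0 Hnu _ _) _; exact: ler_wpM2r.
  have b3 : o (Z *m Fm) <= 2 * g / mu * f.
    apply: le_trans (opnormM n0 Hnu _ _) _; exact: ler_wpM2r.
  apply: le_trans (opnormD n0 Hnu _ _) _.
  apply: le_trans (lerD (opnormD n0 Hnu _ _) (lexx _)) _.
  apply: le_trans (lerD (lerD b1 b2) b3) _.
  by rewrite nh2.
have hTk := Hck T mu mu1 hE.
have hT : o T <= kk + e.
  have -> : T = Km + (T - Km) by rewrite addrC subrK.
  apply: le_trans (opnormD n0 Hnu _ _) _; apply: lerD => //.
  apply: le_trans hE _; rewrite ler_pdivrMr // ler_peMr //.
have Ye : Cm *m T ^+ k = (1%:M - Fm) *m T ^+ k - c *: (Dm *m Km ^+ k)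
                         - c *: (Dm *m (T ^+ k - Km ^+ k)).
  rewrite Cme !mulmxBl mul1mx -scalemxAl mulmxBr.
  exact: lin_id2.
rewrite Ye.
pose oK := o (Km ^+ k).
change (o ((1%:M - Fm) *m T ^+ k - c *: (Dm *m Km ^+ k) - c *: (Dm *m (T ^+ k - Km ^+ k))) <= mu * ((d + 1) * oK + (d * ck + (1 + f) * (kk + e) ^+ k) / mu)).
have oK0 : 0 <= oK := opnorm_ge0 n0 Hnu _.
have T0 : 0 <= o T := opnorm_ge0 n0 Hnu T.
have a1 : o ((1%:M - Fm) *m T ^+ k) <= (1 + f) * (kk + e) ^+ k.
  apply: le_trans (opnormM n0 Hnu _ _) _.
  apply: ler_pM; [exact: opnorm_ge0 | exact: opnorm_ge0 | | ].
    apply: le_trans (opnormB n0 Hnu _ _) _; apply: lerD => //; exact: opnorm1.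
  apply: le_trans (opnormX n0 Hnu _ _) _; apply: lerXn2r => //; rewrite qualifE /=.
    exact: addr_ge0.
have a2 : o (c *: (Dm *m Km ^+ k)) <= mu * (d * oK).
  apply: le_trans (opnormZ n0 Hnu _ _) _; rewrite nc.
  apply: ler_wpM2l; first exact: ltW.
  exact: (opnormM n0 Hnu).
have a3 : o (c *: (Dm *m (T ^+ k - Km ^+ k))) <= d * ck.
  apply: le_trans (opnormZ n0 Hnu _ _) _; rewrite nc.
  rewrite (nh3 d ck mu0).
  apply: ler_wpM2l; first exact: ltW.
  apply: le_trans (opnormM n0 Hnu _ _) _; exact: ler_wpM2l.
have a4 : mu * (d * oK) <= mu * ((d + 1) * oK).
  apply: ler_wpM2l; first exact: ltW.
  by apply: ler_wpM2r => //; rewrite lerDl.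
apply: le_trans (opnormB n0 Hnu _ _) _.
apply: le_trans (lerD (opnormB n0 Hnu _ _) (lexx _)) _.
rewrite nh4 //.
apply: le_trans (lerD (lerD a1 a2) a3) _.
exact: nh5.
Qed.

End Generic.

Section Main.
Variable R : realType.
Variables L M N : nat.
Hypotheses (HL : (0 < L)%N) (HM : (0 < M)%N) (HN : (0 < N)%N).
Variable A : 'M[R[i]]_N.
Hypothesis HA : A \in unitmx.
Variables QD Q : 'M[R]_M.
Hypothesis HQD : QD \in unitmx.
Variable nu : 'cV[R[i]]_(L * M * N) -> R.
Hypothesis Hnu : vector_norm nu.
Local Notation o := (opnorm nu).
Local Notation normc := (@Normc.normc R).

Lemma n0 : (0 < L * M * N)%N.
Proof. by rewrite !muln_gt0 HL HM HN. Qed.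

Definition Dm := (1%:M : 'M[R[i]]_L) *t cmx Q *t A.
Definition Bm := (1%:M : 'M[R[i]]_L) *t cmx QD *t A.
Definition Gm := (1%:M : 'M[R[i]]_L) *t cmx (invmx QD) *t invmx A.
Definition Fm := @Emx R L *t @NMmx R M *t (1%:M : 'M[R[i]]_N).
Definition Km := (1%:M : 'M[R[i]]_L) *t cmx (1%:M - invmx QD *m Q) *t (1%:M : 'M[R[i]]_N).

Lemma GB : Gm *m Bm = 1%:M.
Proof. by rewrite /Gm /Bm tensM3 -cmxM !mulVmx // cmx1 tens1_3. Qed.

Lemma BG : Bm *m Gm = 1%:M.
Proof. by rewrite /Gm /Bm tensM3 -cmxM !mulmxV // cmx1 tens1_3. Qed.

Lemma Km_def : Km = 1%:M - Gm *m Dm.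
Proof. by rewrite /Km cmxB tensB3 cmx1 tens1_3 /Gm /Dm tensM3 -cmxM mulVmx. Qed.

Lemma KmX k : Km ^+ k =
  (1%:M : 'M[R[i]]_L) *t cmx ((1%:M - invmx QD *m Q) ^+ k) *t (1%:M : 'M[R[i]]_N).
Proof.
elim: k => [|k IH]; first by rewrite !expr0 cmx1 tens1_3.
by rewrite exprS IH -mulmxE /Km tensM3 -cmxM mulmx1 mulmxE -exprS.
Qed.



Lemma final_bound k : exists c c' mustar : R,
  [/\ 0 < c, 0 <= c', 0 < mustar &
   forall mu : R, mustar <= mu -> Phat L QD A mu \in unitmx ->
    o (Cmx L Q A mu *m (1%:M - invmx (Phat L QD A mu) *m Cmx L Q A mu) ^+ k)
      <= mu * (c * o ((1%:M : 'M[R[i]]_L) *t cmx (1%:M - invmx QD *m Q) ^+ k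
                        *t (1%:M : 'M[R[i]]_N)) + c' / mu)].
Proof.

have [c [c' [ms [h1 h2 h3 H]]]] := main_bound n0 Hnu Fm GB BG Km_def k.
exists c, c', ms; split => // mu hmu hP.
have eP : Phat L QD A mu = 1%:M - (mu%:C)%C *: Bm by [].
have eC : Cmx L Q A mu = 1%:M - (mu%:C)%C *: Dm - Fm by [].
rewrite eP eC -cmxX -KmX; apply: H => //; by rewrite -eP.
Qed.
End Main.

Theorem lemma4 (R : realType) (L M N : nat) (tau : 'I_M -> R)
  (LQ UQ : 'M[R]_M) (A : 'M[R[i]]_N) (nu : 'cV[R[i]]_(L * M * N) -> R) :
  (0 < L)%N -> (0 < M)%N -> (0 < N)%N ->
  right_radau_nodes tau ->
  (collocQ tau)^T = LQ *m UQ ->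
  unit_lower_triangular LQ -> upper_triangular UQ ->
  A \in unitmx ->
  vector_norm nu ->
  let Q := collocQ tau in
  let QD := UQ^T in
  forall k : nat,
  exists c c' mustar : R,
    [/\ 0 < c, 0 <= c', 0 < mustar &
      forall mu : R, mustar <= mu ->
        Phat L QD A mu \in unitmx ->
        opnorm nu (Cmx L Q A mu *m
                   (1%:M - invmx (Phat L QD A mu) *m Cmx L Q A mu) ^+ k)
        <= mu * (c * opnorm nu ((1%:M : 'M[R[i]]_L)
                                *t cmx (1%:M - invmx QD *m Q) ^+ k
                                *t (1%:M : 'M[R[i]]_N))
                 + c' / mu)].
Proof.
move=> HL HM HN Hrad HLU _ _ HA Hnu Q QD k.
have [tpos tlt _ _] := Hrad.
have tinj : injective tau.
  move=> i j h; apply/val_inj/eqP; case: (ltngtP i j) => [ij|ji|//].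
  - by have := tlt _ _ ij; rewrite h ltxx.
  - by have := tlt _ _ ji; rewrite h ltxx.
have HQD : QD \in unitmx.
  have := collocQ_unit tinj tpos; rewrite HLU unitmx_mul => /andP[_ hU].
  by rewrite /QD unitmx_tr.
exact: (final_bound HL HM HN HA Q HQD Hnu k).
Qed.
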